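(* If $Z\subseteq A^+$ is a regular language which is a strong alt-induced code, then there are only finitely many strong alternative codes $(X,Y)$ with $XY=Z$.
   Context: $A$ is a finite alphabet, $A^*$ the set of words, $A^+$ the non-empty words, $XY=\{xy:x\in X,y\in Y\}$. For $X,Z\subseteq A^*$: $X^{-1}Z=\{u\in A^*: xu\in Z \text{ for some } x\in X\}$, $ZY^{-1}=\{u\in A^*: uy\in Z\text{ for some } y\in Y\}$. A code is a subset of $A^+$ in which every word has at most one factorization into its elements. For non-empty $X,Y\subseteq A^+$, $(X,Y)$ is an alternative code if $XY$ is a code and each element of $XY$ has exactly one factorization $xy$ with $x\in X,y\in Y$ (equivalently, no word admits two different similar alternative factorizations on $(X,Y)$). It is a strong alternative code if moreover $X^{-1}(XY)\subseteq Y$ and $(XY)Y^{-1}\subseteq X$. $Z$ is a strong alt-induced code if $Z=XY$ for some strong alternative code $(X,Y)$. *)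

(* Defs.v *)
From mathcomp Require Import all_boot.
Set Implicit Arguments. Unset Strict Implicit. Unset Printing Implicit Defensive.

Definition lang (A : finType) := seq A -> Prop.

Definition lcat (A : finType) (X Y : lang A) : lang A :=
  fun w => exists x y, X x /\ Y y /\ w = x ++ y.

Definition nonempty_words (A : finType) (X : lang A) : Prop :=
  forall w, X w -> w <> [::].

Definition is_code (A : finType) (X : lang A) : Prop :=
  nonempty_words X /\
  forall s t : seq (seq A),
    (forall w, w \in s -> X w) -> (forall w, w \in t -> X w) ->
    flatten s = flatten t -> s = t.

Definition alt_code (A : finType) (X Y : lang A) : Prop :=
  (exists x, X x) /\ (exists y, Y y) /\
  nonempty_words X /\ nonempty_words Y /\
  is_code (lcat X Y) /\
  (forall x1 y1 x2 y2, X x1 -> Y y1 -> X x2 -> Y y2 ->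
     x1 ++ y1 = x2 ++ y2 -> x1 = x2 /\ y1 = y2).

(* Strong alternative code: additionally X^{-1}(XY) ⊆ Y and (XY)Y^{-1} ⊆ X. *)
Definition strong_alt_code (A : finType) (X Y : lang A) : Prop :=
  alt_code X Y /\
  (forall x u, X x -> lcat X Y (x ++ u) -> Y u) /\
  (forall u y, Y y -> lcat X Y (u ++ y) -> X u).

Definition strong_alt_induced (A : finType) (Z : lang A) : Prop :=
  exists X Y : lang A, strong_alt_code X Y /\ (forall w, lcat X Y w <-> Z w).

Definition regular (A : finType) (Z : lang A) : Prop :=
  exists (Q : finType) (q0 : Q) (delta : Q -> A -> Q) (F : pred Q),
    forall w, Z w <-> F (foldl delta q0 w).

Definition lang_eq (A : finType) (X X' : lang A) : Prop := forall w, X w <-> X' w.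

(* Propositional list membership (lang A has no eqType). *)
Fixpoint inl (T : Type) (p : T) (l : seq T) : Prop :=
  if l is q :: l' then q = p \/ inl p l' else False.

(* Main.v *)
Require Import Defs.
From mathcomp Require Import all_boot.
From Stdlib Require Import ClassicalEpsilon.

Lemma inl_map (T U : eqType) (f : T -> U) (x : T) (s : seq T) :
  x \in s -> inl (f x) (map f s).
Proof.
elim: s => [//|a s IH] /=; rewrite in_cons => /orP [/eqP->|H]; [by left|by right; apply: IH].
Qed.

Lemma inl_map2 (T : eqType) (U : Type) (f : T -> U) (x : T) (s : seq T) :
  x \in s -> inl (f x) (map f s).
Proof.
elim: s => [//|a s IH] /=; rewrite in_cons => /orP [/eqP->|H]; [by left|by right; apply: IH].
Qed.

Theorem theoremT (A : finType) (Z : lang A) :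
  nonempty_words Z -> regular Z -> strong_alt_induced Z ->
  exists l : seq (lang A * lang A),
    forall X Y : lang A, strong_alt_code X Y -> lang_eq (lcat X Y) Z ->
      exists2 p, inl p l & lang_eq X p.1 /\ lang_eq Y p.2.
Proof.
move=> _ [Q [q0 [delta [F HZ]]]] _.
pose YS (S : {set Q}) : lang A := fun w => exists2 q, q \in S & F (foldl delta q w).
pose XS (S : {set Q}) : lang A := fun u => exists y, YS S y /\ Z (u ++ y).
exists (map (fun S => (XS S, YS S)) (enum [set: {set Q}])).
move=> X Y [[[x0 Hx0] [[y0 Hy0] _]] [HL HR]] Heq.
pose b q := if excluded_middle_informative (exists x, X x /\ q = foldl delta q0 x)
            then true else false.
pose S := [set q | b q].
have HY : lang_eq Y (YS S).
  move=> w; split.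
  - move=> Yw; have : Z (x0 ++ w) by apply/Heq; exists x0, w.
    move/HZ; rewrite foldl_cat => Fw.
    exists (foldl delta q0 x0) => //.
    rewrite inE /b; case: excluded_middle_informative => // [[]]; by exists x0.
  - case=> q; rewrite inE /b; case: excluded_middle_informative => // [[x [Xx Eq]]] _ Fw.
    apply: (HL x) => //; apply/Heq; apply/HZ; by rewrite foldl_cat -Eq.
exists (XS S, YS S).
  apply: (@inl_map2 _ _ (fun S0 : {set Q} => (XS S0, YS S0)) S (enum [set: {set Q}])).
  by rewrite mem_enum inE.
split => //= u; split.
- move=> Xu; exists y0; split; first by apply/HY.
  by apply/Heq; exists u, y0.
- case=> y [/HY Yy Zy]; apply: (HR u y) => //; by apply/Heq.
Qed.
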